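(* Let $X$ be a compact Hausdorff space and let $(\mathcal{A},\mathfrak{T})$ be a unital relaxed C*-algebra. Then the set $C(X)\boxtimes(\mathcal{A},\mathfrak{T})$ of all functions $f\colon X\to\mathcal{A}$ that are norm-bounded and continuous with respect to the relaxed topology $\mathfrak{T}$ is a C*-algebra with respect to the point-wise operations and the supremum norm $\|f\|_\infty=\sup_{x\in X}\|f(x)\|$.
   Context: A relaxed C*-algebra is a pair $(\mathcal{A},\mathfrak{T})$ where $\mathcal{A}$ is a unital C*-algebra and $\mathfrak{T}$ is a locally convex topology on $\mathcal{A}$ (the relaxed topology) determined by a separating family $S$ of norm-continuous seminorms on $\mathcal{A}$, such that multiplication, involution and addition of $\mathcal{A}$ are (jointly) continuous with respect to $\mathfrak{T}$. *)

(* Defs.v *)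
From HB Require Import structures.
From mathcomp Require Import all_boot all_order all_algebra.
From mathcomp Require Import all_classical all_reals all_analysis.
From mathcomp.real_closed Require Import complex.
Set Implicit Arguments. Unset Strict Implicit. Unset Printing Implicit Defensive.
Import Order.TTheory GRing.Theory Num.Theory.
Local Open Scope classical_set_scope.
Local Open Scope ring_scope.

Record star_alg_ops (R : realType) (V : Type) := StarAlgOps {
  sa_zero : V;
  sa_add : V -> V -> V;
  sa_opp : V -> V;
  sa_scale : R[i] -> V -> V;
  sa_mul : V -> V -> V;
  sa_star : V -> V;
  sa_norm : V -> R }.

Section Defs.
Variables (R : realType) (V : Type) (o : star_alg_ops R V).
Local Notation "'0v'" := (sa_zero o).
Local Notation "x '+v' y" := (sa_add o x y) (at level 50, left associativity).
Local Notation "'-v' x" := (sa_opp o x) (at level 35).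
Local Notation "x '-v' y" := (sa_add o x (sa_opp o y)) (at level 50, left associativity).
Local Notation "a '*:v' x" := (sa_scale o a x) (at level 40).
Local Notation "x '*v' y" := (sa_mul o x y) (at level 40, left associativity).
Local Notation "x '^*v'" := (sa_star o x) (at level 2).
Local Notation nv := (sa_norm o).

(* [S] (a subset of V), with the operations [o] restricted to it, is a
   (not necessarily unital) C*-algebra: a complex Banach *-algebra whose norm
   is submultiplicative and satisfies the C*-identity ||x^* x|| = ||x||^2. *)
Definition is_Cstar_algebra (S : set V) : Prop :=
  (
      S 0v /\
      (forall x y, S x -> S y -> S (x +v y)) /\
      (forall x, S x -> S (-v x)) /\
      (forall a x, S x -> S (a *:v x)) /\
      (forall x y, S x -> S y -> S (x *v y))  /\
      (forall x, S x -> S (x ^*v))) /\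
  (
      (forall x y z, S x -> S y -> S z -> x +v (y +v z) = (x +v y) +v z) /\
      (forall x y, S x -> S y -> x +v y = y +v x) /\
      (forall x, S x -> 0v +v x = x) /\
      (forall x, S x -> -v x +v x = 0v) /\
      (forall a x y, S x -> S y -> a *:v (x +v y) = a *:v x +v a *:v y) /\
      (forall a b x, S x -> (a + b) *:v x = a *:v x +v b *:v x) /\
      (forall a b x, S x -> (a * b) *:v x = a *:v (b *:v x))  /\
      (forall x, S x -> 1 *:v x = x)) /\
  (
      (forall x y z, S x -> S y -> S z -> x *v (y *v z) = (x *v y) *v z) /\
      (forall x y z, S x -> S y -> S z -> (x +v y) *v z = x *v z +v y *v z) /\
      (forall x y z, S x -> S y -> S z -> x *v (y +v z) = x *v y +v x *v z) /\
      (forall a x y, S x -> S y -> a *:v (x *v y) = (a *:v x) *v y)  /\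
      (forall a x y, S x -> S y -> a *:v (x *v y) = x *v (a *:v y))) /\
  (
      (forall x, S x -> (x ^*v) ^*v = x) /\
      (forall x y, S x -> S y -> (x +v y) ^*v = x ^*v +v y ^*v) /\
      (forall a x, S x -> (a *:v x) ^*v = (conjc a) *:v (x ^*v))  /\
      (forall x y, S x -> S y -> (x *v y) ^*v = y ^*v *v x ^*v)) /\
  (
      (forall x, S x -> 0 <= nv (x)) /\
      (forall x, S x -> nv (x) = 0 -> x = 0v) /\
      (forall x y, S x -> S y -> nv (x +v y) <= (nv (x) + nv (y))) /\
      (forall a x, S x -> nv (a *:v x) = (Normc.normc a * nv (x))) /\
      (forall x y, S x -> S y -> nv (x *v y) <= (nv (x) * nv (y)))  /\
      (forall x, S x -> nv (x ^*v *v x) = nv (x) ^+ 2)) /\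
  (forall u : nat -> V, (forall n, S (u n)) ->
     (forall e : R, 0 < e -> exists N, forall m n, (N <= m)%N -> (N <= n)%N ->
        nv (u m -v u n) < e) ->
     exists l, S l /\ (forall e : R, 0 < e -> exists N, forall n, (N <= n)%N ->
        nv (u n -v l) < e)).

Definition is_unit_of (S : set V) (one : V) : Prop :=
  S one /\ (forall x, S x -> one *v x = x /\ x *v one = x).

Definition is_seminorm (p : V -> R) : Prop :=
  (forall x, 0 <= p x) /\
  (forall x y, p (x +v y) <= (p x + p y)) /\
  (forall a x, p (a *:v x) = (Normc.normc a * p x)).

Definition norm_continuous (p : V -> R) : Prop :=
  forall x (e : R), 0 < e -> exists d : R, 0 < d /\
    forall y, nv (y -v x) < d -> `|p y - p x| < e.

(* Neighbourhoods of [a] in the locally convex topology determined by the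
   family of seminorms [Sf]: sets containing a basic set
   {b | p (b -v a) < e for all p in a finite subfamily}. *)
Definition relaxed_nbhs (Sf : set (V -> R)) (a : V) (U : set V) : Prop :=
  exists (ps : seq (V -> R)) (e : R), (forall p, p \in ps -> Sf p) /\ 0 < e /\
    (forall b, (forall p, p \in ps -> p (b -v a) < e) -> U b).

Definition is_relaxed_Cstar_algebra (one : V) (Sf : set (V -> R)) : Prop :=
  ( is_Cstar_algebra setT /\
      is_unit_of setT one /\
      (forall p, Sf p -> is_seminorm p /\ norm_continuous p) /\
      (forall x, (forall p, Sf p -> p x = 0) -> x = 0v)  /\
      [/\ (forall a b W, relaxed_nbhs Sf (a +v b) W -> exists U W',
             relaxed_nbhs Sf a U /\ relaxed_nbhs Sf b W' /\
             (forall x y, U x -> W' y -> W (x +v y))),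
          (forall a b W, relaxed_nbhs Sf (a *v b) W -> exists U W',
             relaxed_nbhs Sf a U /\ relaxed_nbhs Sf b W' /\
             (forall x y, U x -> W' y -> W (x *v y))) &
          (forall a W, relaxed_nbhs Sf (a ^*v) W -> exists U,
             relaxed_nbhs Sf a U /\ (forall x, U x -> W (x ^*v)))]).

End Defs.

Definition fun_ops (R : realType) (X V : Type) (o : star_alg_ops R V) :
  star_alg_ops R (X -> V) :=
  @StarAlgOps R (X -> V)
    (fun _ => sa_zero o)
    (fun f g x => sa_add o (f x) (g x))
    (fun f x => sa_opp o (f x))
    (fun a f x => sa_scale o a (f x))
    (fun f g x => sa_mul o (f x) (g x))
    (fun f x => sa_star o (f x))
    (fun f => sup [set sa_norm o (f x) | x in [set: X]]).

Definition CX_boxtimes (R : realType) (X : topologicalType) (V : Type)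
  (o : star_alg_ops R V) (Sf : set (V -> R)) : set (X -> V) :=
  [set f : X -> V | (exists M : R, forall x : X, sa_norm o (f x) <= M) /\
           (forall (x : X) (U : set V), relaxed_nbhs o Sf (f x) U ->
              \forall y \near x, U (f y))].

(* Main.v *)
Require Import Defs.
From HB Require Import structures.
From mathcomp Require Import all_boot all_order all_algebra.
From mathcomp Require Import all_classical all_reals all_analysis.
From mathcomp.real_closed Require Import complex.
Set Implicit Arguments. Unset Strict Implicit. Unset Printing Implicit Defensive.
Import Order.TTheory GRing.Theory Num.Theory.
Local Open Scope classical_set_scope.
Local Open Scope ring_scope.

Section Sup.
Variables (R : realType) (X : Type).
Definition Sg (g : X -> R) := sup [set g x | x in [set: X]].

Lemma S_ub g M x : (forall y, g y <= M) -> g x <= Sg g.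
Proof.
move=> hM; rewrite /Sg; apply: (sup_upper_bound _); last by exists x.
split; first by exists (g x); exists x.
by exists M => _ [y _ <-].
Qed.

Lemma S_le g M : 0 <= M -> (forall x, g x <= M) -> Sg g <= M.
Proof.
move=> M0 hM; case: (pselect (exists x : X, True)) => [[x _]|nx].
  rewrite /Sg; apply: ge_sup; first by exists (g x); exists x.
  by move=> _ [y _ <-].
have E0 : [set g z | z in [set: X]] = set0.
  by apply/seteqP; split => [w [y _ _]|//]; exfalso; apply: nx; exists y.
by rewrite /Sg E0 sup0.
Qed.

Lemma S_ge0 g M : (forall x, 0 <= g x) -> (forall x, g x <= M) -> 0 <= Sg g.
Proof.
move=> g0 hM; case: (pselect (exists x : X, True)) => [[x _]|nx].
  exact: le_trans (g0 x) (S_ub x hM).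
have E0 : [set g z | z in [set: X]] = set0.
  by apply/seteqP; split => [w [y _ _]|//]; exfalso; apply: nx; exists y.
by rewrite /Sg E0 sup0.
Qed.

Lemma S_scale g M (c : R) : 0 <= c -> (forall x, 0 <= g x) -> (forall x, g x <= M) ->
  Sg (fun x => c * g x) = c * Sg g.
Proof.
move=> c0 g0 hM.
have Sg0 := S_ge0 g0 hM.
apply/eqP; rewrite eq_le; apply/andP; split.
  apply: S_le; first exact: mulr_ge0.
  by move=> x; apply: ler_wpM2l => //; exact: S_ub hM.
have [->|cn0] := eqVneq c 0.
  rewrite mul0r; apply: (@S_ge0 (fun x => 0 * g x) (0 * M)) => x; first by rewrite mul0r.
  by rewrite !mul0r.
have cp : 0 < c by rewrite lt_def cn0.
have hcM : forall x, c * g x <= c * M by move=> x; apply: ler_wpM2l.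
rewrite -ler_pdivlMl //; apply: S_le.
  by apply: mulr_ge0; [rewrite invr_ge0 | apply: (S_ge0 _ hcM) => x; apply: mulr_ge0].
move=> x; rewrite ler_pdivlMl //; exact: S_ub hcM.
Qed.

Lemma S_sq g M : (forall x, 0 <= g x) -> (forall x, g x <= M) ->
  Sg (fun x => g x ^+ 2) = Sg g ^+ 2.
Proof.
move=> g0 hM.
have Sg0 := S_ge0 g0 hM.
have hM2 : forall x, g x ^+ 2 <= M ^+ 2.
  by move=> x; rewrite lerXn2r ?nnegrE //; [exact: le_trans (g0 x) (hM x)].
have S20 : 0 <= Sg (fun x => g x ^+ 2) by apply: (S_ge0 _ hM2) => x; exact: exprn_ge0.
apply/eqP; rewrite eq_le; apply/andP; split.
  apply: S_le; first exact: exprn_ge0.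
  by move=> x; rewrite lerXn2r ?nnegrE //; exact: S_ub hM.
rewrite -(sqr_sqrtr S20) lerXn2r ?nnegrE ?sqrtr_ge0 //.
apply: S_le; first exact: sqrtr_ge0.
by move=> x; rewrite -(ger0_norm (g0 x)) -sqrtr_sqr ler_wsqrtr //; exact: S_ub hM2.
Qed.
End Sup.

From mathcomp Require Import lra.
Section Alg.
Variables (R : realType) (V : Type) (o : star_alg_ops R V) (one : V) (Sf : set (V -> R)).
Hypothesis hA : is_relaxed_Cstar_algebra o one Sf.
Local Notation add := (sa_add o).
Local Notation opp := (sa_opp o).
Local Notation sc := (sa_scale o).
Local Notation mul := (sa_mul o).
Local Notation st := (sa_star o).
Local Notation nv := (sa_norm o).
Local Notation z0 := (sa_zero o).

Lemma CA : is_Cstar_algebra o setT. Proof. by case: hA. Qed.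

Lemma vaddA x y z : add x (add y z) = add (add x y) z.
Proof. by have [_ [[H _] _]] := CA; apply: H. Qed.
Lemma vaddC x y : add x y = add y x.
Proof. by have [_ [[_ [H _]] _]] := CA; apply: H. Qed.
Lemma vadd0 x : add z0 x = x.
Proof. by have [_ [[_ [_ [H _]]] _]] := CA; apply: H. Qed.
Lemma vaddN x : add (opp x) x = z0.
Proof. by have [_ [[_ [_ [_ [H _]]]] _]] := CA; apply: H. Qed.
Lemma scDr a x y : sc a (add x y) = add (sc a x) (sc a y).
Proof. by have [_ [[_ [_ [_ [_ [H _]]]]] _]] := CA; apply: H. Qed.
Lemma scDl a b x : sc (a + b) x = add (sc a x) (sc b x).
Proof. by have [_ [[_ [_ [_ [_ [_ [H _]]]]]] _]] := CA; apply: H. Qed.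
Lemma scA a b x : sc (a * b) x = sc a (sc b x).
Proof. by have [_ [[_ [_ [_ [_ [_ [_ [H _]]]]]]] _]] := CA; apply: H. Qed.
Lemma sc1 x : sc 1 x = x.
Proof. by have [_ [[_ [_ [_ [_ [_ [_ [_ H]]]]]]] _]] := CA; apply: H. Qed.
Lemma nge0 x : 0 <= nv x.
Proof. by have [_ [_ [_ [_ [[H _] _]]]]] := CA; apply: H. Qed.
Lemma neq0 x : nv x = 0 -> x = z0.
Proof. by have [_ [_ [_ [_ [[_ [H _]] _]]]]] := CA; apply: H. Qed.
Lemma ntri x y : nv (add x y) <= nv x + nv y.
Proof. by have [_ [_ [_ [_ [[_ [_ [H _]]] _]]]]] := CA; apply: H. Qed.
Lemma nZ a x : nv (sc a x) = Normc.normc a * nv x.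
Proof. by have [_ [_ [_ [_ [[_ [_ [_ [H _]]]] _]]]]] := CA; apply: H. Qed.
Lemma nM x y : nv (mul x y) <= nv x * nv y.
Proof. by have [_ [_ [_ [_ [[_ [_ [_ [_ [H _]]]]] _]]]]] := CA; apply: H. Qed.
Lemma ncs x : nv (mul (st x) x) = nv x ^+ 2.
Proof. by have [_ [_ [_ [_ [[_ [_ [_ [_ [_ H]]]]] _]]]]] := CA; apply: H. Qed.
Lemma starK x : st (st x) = x.
Proof. by have [_ [_ [_ [[H _] _]]]] := CA; apply: H. Qed.

Lemma vaddr0 x : add x z0 = x. Proof. by rewrite vaddC vadd0. Qed.
Lemma vaddrN x : add x (opp x) = z0. Proof. by rewrite vaddC vaddN. Qed.
Lemma vaddKl x y : add (opp x) (add x y) = y. Proof. by rewrite vaddA vaddN vadd0. Qed.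
Lemma vaddIl x y z : add x y = add x z -> y = z.
Proof. by move=> h; rewrite -(vaddKl x y) h vaddKl. Qed.
Lemma sc0 x : sc 0 x = z0.
Proof.
apply: (@vaddIl (sc 0 x)); by rewrite vaddr0 -scDl GRing.addr0.
Qed.
Lemma scr0 a : sc a z0 = z0.
Proof.
apply: (@vaddIl (sc a z0)); by rewrite vaddr0 -scDr vaddr0.
Qed.
Lemma voppE x : opp x = sc (-1) x.
Proof.
apply: (@vaddIl x); rewrite vaddrN -{1}(sc1 x) -scDl GRing.addrN.
by rewrite sc0.
Qed.
Lemma voppK x : opp (opp x) = x.
Proof. by rewrite !voppE -scA mulrNN mulr1 sc1. Qed.
Lemma voppD x y : opp (add x y) = add (opp x) (opp y).
Proof. by rewrite !voppE scDr. Qed.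
Lemma vopp0 : opp z0 = z0. Proof. by rewrite voppE scr0. Qed.
Lemma subsub a b c : add a (opp c) = add (add a (opp b)) (add b (opp c)).
Proof. by rewrite vaddA -(vaddA a) vaddN vaddr0. Qed.
Lemma oppsub a b : opp (add a (opp b)) = add b (opp a).
Proof. by rewrite voppD voppK vaddC. Qed.
Lemma scN a x : sc a (opp x) = opp (sc a x).
Proof. by rewrite !voppE -!scA mulrC. Qed.
Lemma scsub a x y : sc a (add x (opp y)) = add (sc a x) (opp (sc a y)).
Proof. by rewrite scDr scN. Qed.
Lemma vsubK a b : add (add a (opp b)) b = a.
Proof. by rewrite -vaddA vaddN vaddr0. Qed.
Lemma vsubr0 a : add a (opp z0) = a.
Proof. by rewrite vopp0 vaddr0. Qed.

Lemma normcN1 : Normc.normc (-1 : R[i]) = 1.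
Proof. by rewrite /Normc.normc /= oppr0 expr0n GRing.addr0 sqrrN expr1n sqrtr1. Qed.
Lemma normc_ge0 (a : R[i]) : 0 <= Normc.normc a.
Proof. by case: a => x y; exact: sqrtr_ge0. Qed.

Lemma semi_nv : Defs.is_seminorm o nv.
Proof. split; [exact: nge0 | split; [exact: ntri | exact: nZ]]. Qed.

Section Semi.
Variable p : V -> R.
Hypothesis hp : Defs.is_seminorm o p.
Lemma p_ge0 x : 0 <= p x. Proof. by case: hp. Qed.
Lemma p_tri x y : p (add x y) <= p x + p y. Proof. by case: hp => _ []. Qed.
Lemma p_Z a x : p (sc a x) = Normc.normc a * p x. Proof. by case: hp => _ []. Qed.
Lemma p0 : p z0 = 0. Proof. by rewrite -(sc0 z0) p_Z Normc.normc0 mul0r. Qed.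
Lemma pN x : p (opp x) = p x. Proof. by rewrite voppE p_Z normcN1 mul1r. Qed.
Lemma psub_sym a b : p (add a (opp b)) = p (add b (opp a)).
Proof. by rewrite -oppsub pN. Qed.
Lemma psub a b c : p (add a (opp c)) <= p (add a (opp b)) + p (add b (opp c)).
Proof. by rewrite (subsub a b c) p_tri. Qed.
End Semi.

Lemma nstar_le x : nv x <= nv (st x).
Proof.
have [->|nx] := eqVneq (nv x) 0; first exact: nge0.
have px : 0 < nv x by rewrite lt_def nx nge0.
rewrite -(ler_pM2r px) -expr2 -ncs; exact: nM.
Qed.
Lemma nstar x : nv (st x) = nv x.
Proof.
apply/eqP; rewrite eq_le nstar_le andbT.
by rewrite -{2}(starK x) nstar_le.
Qed.

Lemma nbhs_self a U : relaxed_nbhs o Sf a U -> U a.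
Proof.
case=> ps [e [hps [e0 hU]]]; apply: (hU a) => p /hps hp.
have [_ [_ [hsem _]]] := hA; have [sp _] := hsem p hp.
by rewrite vaddrN (p0 sp).
Qed.

Variable X : topologicalType.
Definition contf (f : X -> V) := forall (x : X) (U : set V),
  relaxed_nbhs o Sf (f x) U -> \forall y \near x, U (f y).
Definition pcont (f : X -> V) := forall (x : X) p, Sf p -> forall e : R, 0 < e ->
  \forall y \near x, p (add (f y) (opp (f x))) < e.
Definition bnd (f : X -> V) := exists M, forall x, nv (f x) <= M.

Lemma semiSf p : Sf p -> Defs.is_seminorm o p.
Proof. by have [_ [_ [h _]]] := hA; move=> /h []. Qed.
Lemma ncontSf p : Sf p -> Defs.norm_continuous o p.
Proof. by have [_ [_ [h _]]] := hA; move=> /h []. Qed.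

Lemma cont_pcont f : contf f -> pcont f.
Proof.
move=> hf x p hp e e0; apply: (hf x (fun b => p (add b (opp (f x))) < e)).
exists [:: p], e; split; first by move=> q; rewrite inE => /eqP ->.
split=> // b; apply; exact: mem_head.
Qed.

Lemma pcont_cont f : pcont f -> contf f.
Proof.
move=> hf x U [ps [e [hps [e0 hU]]]].
have : \forall y \near x, forall p, p \in ps -> p (add (f y) (opp (f x))) < e.
  elim: ps hps {hU} => [|q ps IH] hps.
    by apply: filterS filterT => y _ p; rewrite in_nil.
  have h1 := hf x q (hps q (mem_head _ _)) e e0.
  have hps' : forall p, p \in ps -> Sf p.
    by move=> p hp; apply: hps; rewrite in_cons hp orbT.
  have h2 := IH hps'.
  apply: filterS2 h1 h2 => y h1y h2y p; rewrite in_cons => /orP[/eqP->//|].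
  exact: h2y.
by apply: filterS => y; exact: hU.
Qed.

Lemma cont0 : contf (fun _ => z0).
Proof. move=> x U /nbhs_self h; by apply: filterS filterT => y _. Qed.

Lemma cont_add f g : contf f -> contf g -> contf (fun x => add (f x) (g x)).
Proof.
move=> hf hg x W hW; have [_ [_ [_ [_ [had _ _]]]]] := hA.
have [U [W' [hU [hW' hUW]]]] := had _ _ _ hW.
apply: filterS2 (hf x U hU) (hg x W' hW') => y; exact: hUW.
Qed.

Lemma cont_mul f g : contf f -> contf g -> contf (fun x => mul (f x) (g x)).
Proof.
move=> hf hg x W hW; have [_ [_ [_ [_ [_ had _]]]]] := hA.
have [U [W' [hU [hW' hUW]]]] := had _ _ _ hW.
apply: filterS2 (hf x U hU) (hg x W' hW') => y; exact: hUW.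
Qed.

Lemma cont_star f : contf f -> contf (fun x => st (f x)).
Proof.
move=> hf x W hW; have [_ [_ [_ [_ [_ _ had]]]]] := hA.
have [U [hU hUW]] := had _ _ hW.
apply: filterS (hf x U hU) => y; exact: hUW.
Qed.

Lemma cont_sc a f : contf f -> contf (fun x => sc a (f x)).
Proof.
move=> hf; apply: pcont_cont => x p hp e e0.
have sp := semiSf hp.
have na := normc_ge0 a.
have k0 : 0 < Normc.normc a + 1 by lra.
have e1 : 0 < e / (Normc.normc a + 1) by rewrite divr_gt0.
apply: filterS (cont_pcont hf x hp e1) => y hy.
rewrite -scsub (p_Z sp).
have hq := p_ge0 sp (add (f y) (opp (f x))).
move: hy; rewrite ltr_pdivlMr // => hy.
nra.
Qed.

Lemma cont_opp f : contf f -> contf (fun x => opp (f x)).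
Proof.
rewrite (_ : (fun x => opp (f x)) = fun x => sc (-1) (f x)); first exact: cont_sc.
by apply: funext => x; rewrite voppE.
Qed.

Lemma bnd0 : bnd (fun _ => z0).
Proof. by exists 0 => x; rewrite (p0 semi_nv). Qed.
Lemma bnd_add f g : bnd f -> bnd g -> bnd (fun x => add (f x) (g x)).
Proof.
move=> [M1 h1] [M2 h2]; exists (M1 + M2) => x.
by apply: le_trans (ntri _ _) _; apply: lerD.
Qed.
Lemma bnd_opp f : bnd f -> bnd (fun x => opp (f x)).
Proof. by move=> [M h]; exists M => x; rewrite (pN semi_nv). Qed.
Lemma bnd_sc a f : bnd f -> bnd (fun x => sc a (f x)).
Proof.
move=> [M h]; exists (Normc.normc a * M) => x.
by rewrite nZ; apply: ler_wpM2l => //; exact: normc_ge0.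
Qed.
Lemma bnd_mul f g : bnd f -> bnd (fun x => g x) -> bnd (fun x => mul (f x) (g x)).
Proof.
move=> [M1 h1] [M2 h2]; exists (M1 * M2) => x.
apply: le_trans (nM _ _) _; apply: ler_pM => //; exact: nge0.
Qed.
Lemma bnd_star f : bnd f -> bnd (fun x => st (f x)).
Proof. by move=> [M h]; exists M => x; rewrite nstar. Qed.

Lemma nle_S f x : bnd f -> nv (f x) <= Sg (fun x => nv (f x)).
Proof. by case=> M hM; exact: S_ub hM. Qed.
Lemma S_nge0 f : bnd f -> 0 <= Sg (fun x => nv (f x)).
Proof. by case=> M hM; apply: S_ge0 hM => y; exact: nge0. Qed.

Lemma complete_CX (u : nat -> X -> V) : (forall n, bnd (u n) /\ contf (u n)) ->
 (forall e : R, 0 < e -> exists N, forall m n, (N <= m)%N -> (N <= n)%N ->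
    Sg (fun x => nv (add (u m x) (opp (u n x)))) < e) ->
 exists l, (bnd l /\ contf l) /\ (forall e : R, 0 < e -> exists N, forall n, (N <= n)%N ->
    Sg (fun x => nv (add (u n x) (opp (l x)))) < e).
Proof.
move=> hu hC.
have hcV := proj2 (proj2 (proj2 (proj2 (proj2 CA)))).
have bsub m n : bnd (fun x => add (u m x) (opp (u n x))).
  exact: (@bnd_add (u m) (fun x => opp (u n x)) (hu m).1 (bnd_opp (hu n).1)).
have pw x : exists lx, forall e : R, 0 < e -> exists N, forall n, (N <= n)%N ->
    nv (add (u n x) (opp lx)) < e.
  have [|lx [_ hlx]] := hcV (fun n => u n x) (fun n => I).
    move=> e e0; have [N hN] := hC e e0; exists N => m n hm hn.
    exact: le_lt_trans (nle_S x (bsub m n)) (hN m n hm hn).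
  by exists lx.
have [l hl] := choice pw.
have unif : forall e : R, 0 < e -> exists N, forall n, (N <= n)%N ->
    forall x, nv (add (u n x) (opp (l x))) < e.
  move=> e e0; have e20 : 0 < e / 2 by rewrite divr_gt0.
  have [N hN] := hC _ e20; exists N => n hn x.
  have [Nx hNx] := hl x _ e20.
  apply: le_lt_trans (psub semi_nv _ (u (maxn N Nx) x) _) _.
  rewrite (splitr e); apply: ltrD.
    exact: le_lt_trans (nle_S x (bsub _ _)) (hN _ _ hn (leq_maxl _ _)).
  exact: hNx (leq_maxr _ _).
have bl : bnd l.
  have [N hN] := unif 1 ltr01; have [M hM] := (hu N).1.
  exists (1 + M) => x; rewrite -(vsubK (l x) (u N x)).
  apply: le_trans (ntri _ _) _; apply: lerD; last exact: hM.
  by rewrite (psub_sym semi_nv); apply/ltW/hN.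
exists l; split; [split => // | ].
  apply: pcont_cont => x p hp e e0.
  have sp := semiSf hp.
  have e30 : 0 < e / 3 by rewrite divr_gt0.
  have [d [d0 hd]] := ncontSf hp z0 e30.
  have small z : nv z < d -> p z < e / 3.
    move=> hz; have := hd z; rewrite vsubr0 (p0 sp) subr0 ger0_norm ?(p_ge0 sp) //.
    by apply.
  have [N hN] := unif d d0.
  apply: filterS (cont_pcont (hu N).2 x hp e30) => y hy.
  apply: le_lt_trans (psub sp _ (u N y) _) _.
  apply: le_lt_trans (lerD (lexx _) (psub sp _ (u N x) _)) _.
  have -> : e = e / 3 + (e / 3 + e / 3) by lra.
  apply: ltrD; first by apply: small; rewrite (psub_sym semi_nv); exact: hN.
  apply: ltrD => //; apply: small; exact: hN.
move=> e e0; have e20 : 0 < e / 2 by rewrite divr_gt0.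
have [N hN] := unif _ e20; exists N => n hn.
apply: (@le_lt_trans _ _ (e / 2)); last by lra.
apply: S_le; [exact: ltW | by move=> x; apply/ltW/hN].
Qed.

End Alg.

Lemma lemma1_aux (R : realType) (X : topologicalType)
  (hX : compact [set: X]) (hH : hausdorff_space X)
  (V : Type) (o : star_alg_ops R V) (one : V) (Sf : set (V -> R))
  (hA : is_relaxed_Cstar_algebra o one Sf) :
  is_Cstar_algebra (@fun_ops R X V o) (@CX_boxtimes R X V o Sf).
Proof.
have [_ [[A [C [Z [N [Dr [Dl [SA S1]]]]]]] [[MA [MDl [MDr [MZl MZr]]]] [[SK [SD [SZ SM]]] _]]]] := CA hA.
rewrite /CX_boxtimes /=.
split.
  split; first by split; [exact: (bnd0 hA) | exact: (cont0 hA)].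
  split; first by move=> f g [bf cf] [bg cg]; split; [exact: (bnd_add hA) | exact: (cont_add hA)].
  split; first by move=> f [bf cf]; split; [exact: (bnd_opp hA) | exact: (cont_opp hA)].
  split; first by move=> a f [bf cf]; split; [exact: (bnd_sc hA) | exact: (cont_sc hA)].
  split; first by move=> f g [bf cf] [bg cg]; split; [exact: (bnd_mul hA) | exact: (cont_mul hA)].
  by move=> f [bf cf]; split; [exact: (bnd_star hA) | exact: (cont_star hA)].
split.
  split; first by move=> f g h _ _ _; apply: funext => x; apply: A.
  split; first by move=> f g _ _; apply: funext => x; apply: C.
  split; first by move=> f _; apply: funext => x; apply: Z.
  split; first by move=> f _; apply: funext => x; apply: N.
  split; first by move=> a f g _ _; apply: funext => x; apply: Dr.
  split; first by move=> a b f _; apply: funext => x; apply: Dl.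
  split; first by move=> a b f _; apply: funext => x; apply: SA.
  by move=> f _; apply: funext => x; apply: S1.
split.
  split; first by move=> f g h _ _ _; apply: funext => x; apply: MA.
  split; first by move=> f g h _ _ _; apply: funext => x; apply: MDl.
  split; first by move=> f g h _ _ _; apply: funext => x; apply: MDr.
  split; first by move=> a f g _ _; apply: funext => x; apply: MZl.
  by move=> a f g _ _; apply: funext => x; apply: MZr.
split.
  split; first by move=> f _; apply: funext => x; apply: SK.
  split; first by move=> f g _ _; apply: funext => x; apply: SD.
  split; first by move=> a f _; apply: funext => x; apply: SZ.
  by move=> f g _ _; apply: funext => x; apply: SM.
split.
  split; first by move=> f [bf _]; exact: (S_nge0 hA).
  split.
    move=> f [bf _] h0; apply: funext => x; apply: (neq0 hA).
    apply/eqP; rewrite eq_le (nge0 hA) andbT.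
    move: h0 => /= h0.
    by have := nle_S x bf; rewrite /Sg /= h0.
  split.
    move=> f g [bf _] [bg _] /=.
    apply: S_le; first exact: addr_ge0 (S_nge0 hA bf) (S_nge0 hA bg).
    move=> x; apply: le_trans (ntri hA _ _) _; apply: lerD; exact: nle_S.
  split.
    move=> a f [[M hM] _] /=.
    rewrite (_ : (fun x => sa_norm o (sa_scale o a (f x))) =
                 fun x => Normc.normc a * sa_norm o (f x)); last first.
      by apply: funext => x; rewrite (nZ hA).
    by apply: (S_scale _ _ hM); [exact: normc_ge0 | move=> x; exact: (nge0 hA)].
  split.
    move=> f g [bf _] [bg _] /=.
    apply: S_le; first exact: mulr_ge0 (S_nge0 hA bf) (S_nge0 hA bg).
    move=> x; apply: le_trans (nM hA _ _) _.
    by apply: ler_pM; [exact: (nge0 hA) | exact: (nge0 hA) | exact: nle_S | exact: nle_S].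
  move=> f [[M hM] _] /=.
  rewrite (_ : (fun x => sa_norm o (sa_mul o (sa_star o (f x)) (f x))) =
               fun x => sa_norm o (f x) ^+ 2); last first.
    by apply: funext => x; rewrite (ncs hA).
  by apply: (S_sq _ hM) => x; exact: (nge0 hA).
move=> u hu hC.
have [l [hl hconv]] := complete_CX hA (u := u) hu hC.
by exists l.
Qed.

Unset Implicit Arguments.
Set Strict Implicit.
Set Printing Implicit Defensive.
Local Close Scope ring_scope.
Local Close Scope classical_set_scope.

Theorem lemma1 (R : realType) (X : topologicalType)
  (hX : compact [set: X]) (hH : hausdorff_space X)
  (V : Type) (o : star_alg_ops R V) (one : V) (Sf : set (V -> R))
  (hA : is_relaxed_Cstar_algebra o one Sf) :
  is_Cstar_algebra (@fun_ops R X V o) (@CX_boxtimes R X V o Sf).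
Proof. exact: (@lemma1_aux R X hX hH V o one Sf hA). Qed.
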